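(* Let $(W_i',X_i,Y_i)'$, $i=1,2,\ldots$, be i.i.d. draws from a population $F_{W,X,Y}$, where $W$ is a vector of controls with support $\mathbb{W}$, $X$ is a scalar policy variable and $Y$ a scalar outcome, with $\mathbb{E}[Y^2\mid W=w]<\infty$ and $\mathbb{E}[X^2\mid W=w]<\infty$ for all $w\in\mathbb{W}$. Let $e_0(w)=\mathbb{E}[X\mid W=w]$, $v_0(w)=\mathbb{V}(X\mid W=w)$, and assume there is $\kappa>0$ with $v_0(w)\geq\kappa$ for all $w\in\mathbb{W}$. Let $b_0(w)=v_0(w)^{-1}\mathbb{C}(X,Y\mid W=w)$ and $\beta_0=\mathbb{E}[b_0(W)]$. Assume: (i) $X$ is a continuous random variable with bounded support $\mathbb{X}=[\underline{x},\overline{x}]$; (ii) the conditional density $f_{X\mid W}(x\mid w)$ is bounded and bounded away from zero on $\mathbb{W}\times\mathbb{X}$; (iii) $Y=h(X,U)$ where $h(x,u)$ is continuously differentiable in $x$ for all $(x,u)\in\mathbb{X}\times\mathbb{U}$ ($\mathbb{U}$ the support of $U$) and $h(\underline{x},u)$ is finite for all $u\in\mathbb{U}$; (iv) $U$ is conditionally independent of $X$ given $W=w$ for all $w\in\mathbb{W}$. Then $$\beta_0=\mathbb{E}\left[\omega(W,X)\frac{\partial h(X,U)}{\partial x}\right],$$ where, with $F_{X\mid W}$ the conditional CDF of $X$ given $W$, $$\omega(w,x)=\frac{1}{f_{X\mid W}(x\mid w)}\,\frac{\mathbb{E}[X-e_0(W)\mid W=w,X\geq x]\,(1-F_{X\mid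 W}(x\mid w))}{\int_{\underline{x}}^{\overline{x}}\mathbb{E}[X-e_0(W)\mid W=w,X\geq v]\,(1-F_{X\mid W}(v\mid w))\,\mathrm{d}v}.$$
   Context: $\mathbb{C}(\cdot,\cdot\mid W=w)$ and $\mathbb{V}(\cdot\mid W=w)$ denote conditional covariance and variance given $W=w$. *)

(* Defs.v *)
From HB Require Import structures.
From mathcomp Require Import all_boot all_order all_algebra.
From mathcomp Require Import all_classical all_reals all_analysis.
Set Implicit Arguments. Unset Strict Implicit. Unset Printing Implicit Defensive.
Import Order.TTheory GRing.Theory Num.Theory.
Import numFieldNormedType.Exports.
Local Open Scope classical_set_scope.
Local Open Scope ring_scope.

(* W : TW with law mu;  given W = w, X has Lebesgue
   density f w supported on [a,b] and U has law nu w, with X and U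
   conditionally independent given W (assumption (iv)); Y = h X U.
   Hence the conditional expectation of g(X,U) given W = w is the
   integral of g against (f w x dx) (x) (nu w). *)
Section Model.
Context {R : realType} {dW dU : measure_display}
  {TW : measurableType dW} {TU : measurableType dU}.
Variables (a b : R) (f : TW -> R -> R) (nu : R.-pker TW ~> TU).

Definition condEe (g : R -> TU -> R) (w : TW) : \bar R :=
  (\int[nu w]_u \int[lebesgue_measure]_(x in `[a, b]) (g x u * f w x)%:E)%E.

Definition condE (g : R -> TU -> R) (w : TW) : R := fine (condEe g w).

Definition e0 (w : TW) : R := condE (fun x _ => x) w.

Definition v0 (w : TW) : R := condE (fun x _ => (x - e0 w) ^+ 2) w.

Definition covXY (h : R -> TU -> R) (w : TW) : R :=
  condE (fun x u => (x - e0 w) * (h x u - condE h w)) w.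

Definition b0 (h : R -> TU -> R) (w : TW) : R := (v0 w)^-1 * covXY h w.

Definition cdfXW (w : TW) (x : R) : R := condE (fun t _ => (if t <= x then 1 else 0)) w.

(* E[X - e_0(W) | W = w, X >= x]
   = E[(X - e_0(w)) 1{X >= x} | W = w] / P(X >= x | W = w) *)
Definition condE_tail (w : TW) (x : R) : R :=
  condE (fun t _ => (t - e0 w) * (if x <= t then 1 else 0)) w /
  condE (fun t _ => (if x <= t then 1 else 0)) w.

Definition omega_num (w : TW) (x : R) : R := condE_tail w x * (1 - cdfXW w x).

Definition omega (w : TW) (x : R) : R :=
  (f w x)^-1 *
  (omega_num w x / Rintegral lebesgue_measure `[a, b] (omega_num w)).

End Model.

(* Main.v *)
Require Import Defs.
From HB Require Import structures.
From mathcomp Require Import all_boot all_order all_algebra.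
From mathcomp Require Import all_classical all_reals all_analysis.
From mathcomp Require Import measurable_realfun.
From mathcomp Require Import ring lra.
Import Order.TTheory GRing.Theory Num.Theory.
Import numFieldNormedType.Exports.
Local Open Scope classical_set_scope.
Local Open Scope ring_scope.
Import HBNNSimple.
Section nullint.
Context d (T : measurableType d) (R : realType) (mu : {measure set T -> \bar R}).
Local Open Scope ereal_scope.

Lemma ge0_le_integral_null (N : set T) (f g : T -> \bar R) :
  measurable N -> mu N = 0 -> (forall x, 0 <= f x) -> (forall x, 0 <= g x) ->
  (forall x, ~ N x -> f x <= g x) -> \int[mu]_x f x <= \int[mu]_x g x.
Proof.
move=> mN N0 f0 g0 fg.
rewrite (ge0_integralTE _ f0) (ge0_integralTE _ g0).
apply/ge_ereal_sup => /= _ -[h /= hf <-].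
have mNC : measurable (~` N) by exact: measurableC.
pose h' := proj_nnsfun h mNC.
have -> : sintegral mu h = sintegral mu h'.
  have sE (k : {nnsfun T >-> R}) : sintegral mu k = \int[mu]_x (k x)%:E.
    by rewrite integral_nnsfun// patch_setT.
  rewrite !sE.
  apply: ae_eq_integral => //.
  - by apply/measurable_EFinP; exact: measurable_funTS.
  - by apply/measurable_EFinP; exact: measurable_funTS.
  - exists N; split => // x /= hx; apply: contrapT => Nx; apply: hx => _.
    by rewrite /h' /= mindicE mem_set ?mulr1.
apply: ereal_sup_ubound; exists h' => //= x.
rewrite /h' /= mindicE; case: (boolP (x \in ~` N)) => [/set_mem xN|xN].
  by rewrite mulr1; apply: le_trans (hf x) (fg x xN).
by rewrite mulr0.
Qed.

Lemma integral_null (N : set T) (f g : T -> \bar R) :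
  measurable N -> mu N = 0 ->
  (forall x, ~ N x -> f x = g x) -> \int[mu]_x f x = \int[mu]_x g x.
Proof.
move=> mN N0 fg; rewrite integralE [in RHS]integralE; congr (_ - _).
- apply/eqP; rewrite eq_le; apply/andP; split.
  + apply: (@ge0_le_integral_null N (f^\+) (g^\+) mN N0) => // x Nx.
    by rewrite !funeposE fg.
  + apply: (@ge0_le_integral_null N (g^\+) (f^\+) mN N0) => // x Nx.
    by rewrite !funeposE fg.
- apply/eqP; rewrite eq_le; apply/andP; split.
  + apply: (@ge0_le_integral_null N (f^\-) (g^\-) mN N0) => // x Nx.
    by rewrite !funenegE fg.
  + apply: (@ge0_le_integral_null N (g^\-) (f^\-) mN N0) => // x Nx.
    by rewrite !funenegE fg.
Qed.

Lemma ge0_le_integral_nullD (N D : set T) (f g : T -> \bar R) :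
  measurable N -> mu N = 0 -> (forall x, D x -> 0 <= f x) -> (forall x, D x -> 0 <= g x) ->
  (forall x, D x -> ~ N x -> f x <= g x) ->
  \int[mu]_(x in D) f x <= \int[mu]_(x in D) g x.
Proof.
move=> mN N0 f0 g0 fg; rewrite integral_mkcond [leRHS]integral_mkcond.
apply: (@ge0_le_integral_null N (f \_ D) (g \_ D) mN N0) => x; rewrite /patch; case: ifPn => // /set_mem.
- by move/f0.
- by move/g0.
- by move=> Dx Nx; exact: fg.
Qed.

Lemma integral_nullD (N D : set T) (f g : T -> \bar R) :
  measurable N -> mu N = 0 ->
  (forall x, D x -> ~ N x -> f x = g x) ->
  \int[mu]_(x in D) f x = \int[mu]_(x in D) g x.
Proof.
move=> mN N0 fg; rewrite integral_mkcond [RHS]integral_mkcond.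
apply: (@integral_null N (f \_ D) (g \_ D) mN N0) => x Nx; rewrite /patch; case: ifPn => // /set_mem Dx.
exact: fg.
Qed.
End nullint.

Section reals.
Context {R : realType}.
Local Notation mu := (@lebesgue_measure R).

Lemma boundedP' (g : R -> R) (A : set R) (M : R) :
  (forall x, A x -> `|g x| <= M) -> [bounded g x | x in A].
Proof.
move=> gM; exists M; split; rewrite ?num_real// => y My x Ax.
by apply: le_trans (gM x Ax) (ltW My).
Qed.

Lemma integrable_bnd (a b : R) (g : R -> R) (M : R) :
  measurable_fun `[a, b] g -> (forall x, x \in `[a, b] -> `|g x| <= M) ->
  mu.-integrable `[a, b] (EFin \o g).
Proof.
move=> mg gM; apply: measurable_bounded_integrable => //.
- have := @lebesgue_measure_itv R `[a, b]; rewrite /= => ->; case: ifP => _; exact: ltry.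
- by apply: boundedP' => x /= xab; exact: gM.
Qed.

Lemma integral_single (D : set R) (x : R) (g : R -> \bar R) :
  (forall t, t != x -> g t = 0%E) -> (\int[mu]_(t in D) g t = 0)%E.
Proof.
move=> g0; rewrite (@integral_nullD _ _ _ mu [set x] D g (cst 0%E)) ?integral0//.
- exact: lebesgue_measure_set1.
- by move=> t _ /eqP tx; apply: g0.
Qed.


Lemma measurable_param {d1} {T1 : measurableType d1} (D : set R) (k : T1 * R -> R) :
  measurable D -> measurable_fun setT k ->
  measurable_fun setT (fun x => (\int[mu]_(t in D) (k (x, t))%:E)%E).
Proof.
move=> mD mk.
pose K : T1 * R -> \bar R := fun p => (k p * \1_D p.2)%:E.
have mK : measurable_fun setT K.
  apply/measurable_EFinP; apply: measurable_funM => //.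
  by apply: measurableT_comp; [exact: measurable_indic|exact: measurable_snd].
have -> : (fun x => (\int[mu]_(t in D) (k (x, t))%:E)%E) = fubini_F mu K.
  apply/funext => x; rewrite /fubini_F [LHS]integral_mkcond; apply: eq_integral => t _.
  by rewrite /K /patch /= indicE; case: ifPn => _; rewrite ?mulr1 ?mulr0.
have -> : fubini_F mu K = fun x => (fubini_F mu (K^\+) x - fubini_F mu (K^\-) x)%E.
  apply: boolp.funext => x; rewrite /fubini_F [LHS]integralE; congr (_ - _)%E.
    by apply: eq_integral => y _; rewrite !funeposE.
  by apply: eq_integral => y _; rewrite !funenegE.
apply: emeasurable_funB.
- by apply: measurable_fun_fubini_tonelli_F => //; exact: measurable_funepos.
- by apply: measurable_fun_fubini_tonelli_F => //; exact: measurable_funeneg.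
Qed.


Lemma int_slice (a b c : R) (G : R -> R) (M : R) :
  measurable_fun setT G -> (forall t, t \in `[a, b] -> `|G t| <= M) ->
  (\int[mu]_t (c * (G t * \1_`[a, b] t))%:E = (c * \int[mu]_(t in `[a, b]) G t)%:E)%E.
Proof.
move=> mG GM.
have iG : mu.-integrable `[a, b] (EFin \o G).
  by apply: (@integrable_bnd a b G M) => //; exact: measurable_funTS.
rewrite EFinM /Rintegral fineK; last exact: integrable_fin_num.
rewrite -(integralZl _ iG); last exact: measurable_itv.
rewrite [RHS]integral_mkcond; apply: eq_integral => t _.
rewrite /patch indicE; case: ifPn => _ /=; first by rewrite mulr1 EFinM.
by rewrite !mulr0 ?mule0.
Qed.


Lemma measurable_S (x : R) : measurable_fun setT (fun t : R => (if x <= t then 1 else 0 : R)).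
Proof.
apply: measurable_fun_ifT => //.
exact: measurable_fun_ler.
Qed.

Lemma measurable_S' (t : R) : measurable_fun setT (fun x : R => (if x <= t then 1 else 0 : R)).
Proof.
apply: measurable_fun_ifT => //.
exact: measurable_fun_ler.
Qed.

Lemma measurable_S2 : measurable_fun setT (fun p : R * R => (if p.1 <= p.2 then 1 else 0 : R)).
Proof.
apply: measurable_fun_ifT => //.
apply: measurable_fun_ler; [exact: measurable_fst|exact: measurable_snd].
Qed.


Lemma normS (x t : R) : `|(if x <= t then 1 else 0 : R)| <= 1.
Proof. by case: ifP; rewrite ?normr1 ?normr0. Qed.

Lemma fubini_tri (a b : R) (g k : R -> R) (Mg Mk : R) :
  measurable_fun setT g -> measurable_fun setT k ->
  (forall t, t \in `[a, b] -> `|g t| <= Mg) ->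
  (forall x, x \in `[a, b] -> `|k x| <= Mk) ->
  \int[mu]_(x in `[a, b]) ((\int[mu]_(t in `[a, b]) (g t * (if x <= t then 1 else 0))) * k x)
  = \int[mu]_(t in `[a, b]) (g t * \int[mu]_(x in `[a, b]) (k x * (if x <= t then 1 else 0))).
Proof.
move=> mg mk gM kM.
pose phi := fun p : R * R => (k p.1 * \1_`[a, b] p.1) *
   ((g p.2 * (if p.1 <= p.2 then 1 else 0)) * \1_`[a, b] p.2).
have mphi : measurable_fun setT phi.
  apply: measurable_funM; apply: measurable_funM.
  - by apply: measurableT_comp; [exact: mk|exact: measurable_fst].
  - by apply: measurableT_comp; [exact: measurable_indic|exact: measurable_fst].
  - apply: measurable_funM; last exact: measurable_S2.
    by apply: measurableT_comp; [exact: mg|exact: measurable_snd].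
  - by apply: measurableT_comp; [exact: measurable_indic|exact: measurable_snd].
have iphi : (mu \x mu)%E.-integrable setT (EFin \o phi).
  apply/integrableP; split; first exact/measurable_EFinP.
  apply: (@le_lt_trans _ _ (\int[(mu \x mu)%E]_p
     ((`|Mk| * `|Mg|) * \1_(`[a, b]%classic `*` `[a, b]%classic) p)%:E)%E).
    apply: ge0_le_integral => //.
    - by apply: measurableT_comp => //; exact/measurable_EFinP.
    - apply/measurable_EFinP; apply: measurable_funM => //.
      apply: measurable_indic; apply: measurableX; exact: measurable_itv.
    - move=> [x t] _; rewrite /phi /= lee_fin !indicE in_setX /=.
      case: (boolP (x \in `[a, b]%classic)) => xI; case: (boolP (t \in `[a, b]%classic)) => tI;
        rewrite /= ?mulr0 ?mul0r ?normr0 ?mulr1 ?mulr_ge0//.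
      rewrite !normrM; apply: ler_pM => //.
        by apply: le_trans (kM x (set_mem xI)) (ler_norm _).
      rewrite -[leRHS]mulr1; apply: ler_pM => //; last exact: normS.
      by apply: le_trans (gM t (set_mem tI)) (ler_norm _).
  under eq_integral do rewrite EFinM.
  rewrite ge0_integralZl_EFin//; last first.
    apply: measurableT_comp => //; apply: measurable_indic.
    by apply: measurableX; exact: measurable_itv.
  rewrite integral_indic//; last by apply: measurableX; exact: measurable_itv.
  rewrite setIT.
  set X := (X in (_ * X)%E).
  have -> : X = (mu `[a, b]%classic * mu `[a, b]%classic)%E.
    by rewrite /X; apply: product_measure1E; exact: measurable_itv.
  have muI : (mu `[a, b]%classic < +oo)%E.
    have := @lebesgue_measure_itv R `[a, b]; rewrite /= => ->; case: ifP => _; exact: ltry.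
  rewrite lte_mul_pinfty //.
  by apply: lte_mul_pinfty => //; rewrite ge0_fin_numE.
have bS (x : R) (G : R -> R) M : (forall t, t \in `[a, b] -> `|G t| <= M) ->
    forall t, t \in `[a, b] -> `|G t * (if x <= t then 1 else 0)| <= M.
  move=> GM t tI; rewrite normrM -[leRHS]mulr1; apply: ler_pM => //; first exact: GM.
  exact: normS.
have bS' (t : R) (G : R -> R) M : (forall x, x \in `[a, b] -> `|G x| <= M) ->
    forall x, x \in `[a, b] -> `|G x * (if x <= t then 1 else 0)| <= M.
  move=> GM x xI; rewrite normrM -[leRHS]mulr1; apply: ler_pM => //; first exact: GM.
  exact: normS.
have L : (\int[mu]_(x in `[a, b])
     ((\int[mu]_(t in `[a, b]) (g t * (if x <= t then 1 else 0))) * k x)%:E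
   = \int[mu]_x \int[mu]_y (EFin \o phi) (x, y))%E.
  transitivity (\int[mu]_x ((k x * \1_`[a, b] x) *
      (\int[mu]_(t in `[a, b]) (g t * (if x <= t then 1 else 0))))%:E)%E.
    rewrite integral_mkcond; apply: eq_integral => x _; rewrite /patch indicE.
    by case: ifPn => _; rewrite ?mulr1 ?mulr0 ?mul0r// mulrC.
  apply: eq_integral => x _.
  rewrite -(@int_slice a b (k x * \1_`[a, b] x) (fun t => g t * (if x <= t then 1 else 0)) Mg).
  - by apply: eq_integral => t _.
  - by apply: measurable_funM => //; exact: measurable_S.
  - exact: bS.
have R' : (\int[mu]_(t in `[a, b])
     (g t * \int[mu]_(x in `[a, b]) (k x * (if x <= t then 1 else 0)))%:E
   = \int[mu]_y \int[mu]_x (EFin \o phi) (x, y))%E.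
  transitivity (\int[mu]_t ((g t * \1_`[a, b] t) *
      (\int[mu]_(x in `[a, b]) (k x * (if x <= t then 1 else 0))))%:E)%E.
    rewrite integral_mkcond; apply: eq_integral => t _; rewrite /patch indicE.
    by case: ifPn => _; rewrite ?mulr1 ?mulr0 ?mul0r.
  apply: eq_integral => t _.
  rewrite -(@int_slice a b (g t * \1_`[a, b] t) (fun x => k x * (if x <= t then 1 else 0)) Mk).
  - apply: eq_integral => x _; rewrite /phi /=; congr (_%:E).
    by ring.
  - by apply: measurable_funM => //; exact: measurable_S'.
  - exact: bS'.
by rewrite /Rintegral L R' (Fubini iphi).
Qed.


Lemma ftc_piece (a b : R) (H dH : R -> R) : a < b ->
  {within `[a, b], continuous H} -> {within `[a, b], continuous dH} ->
  (forall x, x \in `]a, b[ -> is_derive x 1 H (dH x)) ->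
  forall t, t \in `[a, b] ->
  \int[mu]_(x in `[a, b]) (dH x * (if x <= t then 1 else 0)) = H t - H a.
Proof.
move=> ab cH cdH dHd t; rewrite in_itv /= => /andP[aat tb].
have [ta|ta] := eqVneq t a.
  rewrite ta subrr /Rintegral.
  rewrite (@integral_nullD _ _ _ mu [set a] _ _ (cst 0%E)) ?integral0//.
  - exact: lebesgue_measure_set1.
  - move=> x /= xI xa; move: xI; rewrite in_itv /= => /andP[ax _].
    case: ifPn => xa'; last by rewrite mulr0.
    by exfalso; apply: xa; apply/eqP; rewrite eq_le xa' ax.
have {ta aat} aat : a < t by rewrite lt_neqAle eq_sym ta aat.
have sub : `[a, t]%classic `<=` `[a, b]%classic.
  move=> x /=; rewrite !in_itv /= => /andP[? ?]; apply/andP; split => //.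
  exact: le_trans tb.
rewrite /Rintegral.
transitivity (fine (\int[mu]_(x in `[a, t]) (dH x)%:E)%E).
  congr fine; rewrite integral_mkcond [RHS]integral_mkcond.
  apply: eq_integral => x _; rewrite /patch.
  case: (boolP (x \in `[a, t]%classic)) => xt.
    rewrite mem_set; last exact: sub (set_mem xt).
    move: (set_mem xt); rewrite /= in_itv /= => /andP[_ ->].
    by rewrite mulr1.
  case: ifPn => // xb; case: ifPn => xt'; last by rewrite mulr0.
  exfalso; move/negP: xt; apply; apply: mem_set.
  move: (set_mem xb); rewrite /= !in_itv /= => /andP[ax _].
  by rewrite ax xt'.
rewrite (@continuous_FTC2 _ dH H a t aat).
- by [].
- exact: continuous_subspaceW sub cdH.
- have /(continuous_within_itvP _ aat) [_ Ha Ht] := continuous_subspaceW sub cH.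
  split => // x xI; apply: ex_derive; apply: dHd.
  move: xI; rewrite !in_itv /= => /andP[-> xt]; exact: lt_le_trans tb.
- move=> x xI; rewrite derive1E; apply: derive_val; apply: dHd.
  move: xI; rewrite !in_itv /= => /andP[-> xt]; exact: lt_le_trans tb.
Qed.

End reals.

Set Implicit Arguments. Unset Strict Implicit.

Lemma measureC0 d (T : measurableType d) (R : realType) (m : {measure set T -> \bar R})
  (S : set T) : measurable S -> m setT = 1%E -> m S = 1%E -> m (~` S) = 0%E.
Proof.
move=> mS mT mS1; have mTf : (m setT < +oo)%E by rewrite mT ltry.
rewrite -setTD (measureD measurableT mS mTf).
rewrite setTI; apply: (@eq_trans _ _ (1 - 1)%E); last by rewrite subee.
by congr (_ - _)%E; [exact: mT|exact: mS1].
Qed.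

Lemma amgm (R : realType) (p q : R) : `|p * q| <= p ^+ 2 + q ^+ 2.
Proof.
rewrite normrM -[p ^+ 2](ger0_norm (sqr_ge0 p)) -[q ^+ 2](ger0_norm (sqr_ge0 q)) !normrX.
have hp := normr_ge0 p; have hq := normr_ge0 q.
set P := `|p|; set Q := `|q|.
have := sqr_ge0 (P - Q); rewrite sqrrB => H.
nra.
Qed.

Section Model.
Context {R : realType} {dW dU : measure_display}
  {TW : measurableType dW} {TU : measurableType dU}.
Variables (nu : R.-pker TW ~> TU) (a b : R) (f : TW -> R -> R).
Local Notation mu := (@lebesgue_measure R).

Lemma condE_indep (g : R -> R) w :
  condE a b f nu (fun x _ => g x) w = \int[mu]_(x in `[a, b]) (g x * f w x).
Proof.
rewrite /condE /condEe.
have -> : (fun u : TU => (\int[mu]_(x in `[a, b]) (g x * f w x)%:E)%E) =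
    cst (\int[mu]_(x in `[a, b]) (g x * f w x)%:E)%E by [].
by rewrite integral_cst// prob_kernel mule1.
Qed.

Lemma normI (x : R) : x \in `[a, b] -> `|x| <= `|a| + `|b|.
Proof.
rewrite in_itv /= => /andP[ax xb].
have h1 := ler_norm b; have h2 := ler_norm (- a); rewrite normrN in h2.
have h3 := normr_ge0 a; have h4 := normr_ge0 b.
rewrite ler_norml; apply/andP; split; lra.
Qed.

Let mI : measurable (`[a, b]%classic : set (measurableTypeR R)).
Proof. exact: measurable_itv. Qed.

Lemma iZ (c : R) (g : R -> R) : mu.-integrable `[a, b] (EFin \o g) ->
  mu.-integrable `[a, b] (EFin \o (fun x => c * g x)).
Proof.
move=> ig; have := @integrableZl _ _ _ mu _ mI c _ ig.
by apply: eq_integrable => // x _ /=; rewrite EFinM.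
Qed.

Lemma iZr (c : R) (g : R -> R) : mu.-integrable `[a, b] (EFin \o g) ->
  mu.-integrable `[a, b] (EFin \o (fun x => g x * c)).
Proof.
move=> /(iZ c); apply: eq_integrable => // x _ /=; by rewrite mulrC.
Qed.

Lemma iD (g1 g2 : R -> R) : mu.-integrable `[a, b] (EFin \o g1) ->
  mu.-integrable `[a, b] (EFin \o g2) ->
  mu.-integrable `[a, b] (EFin \o (fun x => g1 x + g2 x)).
Proof.
move=> i1 i2; have := integrableD mI i1 i2.
by apply: eq_integrable => // x _ /=; rewrite EFinD.
Qed.

Lemma iB (g1 g2 : R -> R) : mu.-integrable `[a, b] (EFin \o g1) ->
  mu.-integrable `[a, b] (EFin \o g2) ->
  mu.-integrable `[a, b] (EFin \o (fun x => g1 x - g2 x)).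
Proof.
move=> i1 i2; have := integrableB mI i1 i2.
by apply: eq_integrable => // x _ /=; rewrite EFinB.
Qed.

Lemma intE (g : R -> R) : mu.-integrable `[a, b] (EFin \o g) ->
  (\int[mu]_(x in `[a, b]) (g x)%:E = (\int[mu]_(x in `[a, b]) g x)%:E)%E.
Proof. by move=> ig; rewrite /Rintegral fineK//; exact: integrable_fin_num. Qed.

Section fixed_w.
Variable w : TW.
Hypothesis mF : measurable_fun setT (f w).
Hypothesis F1 : (\int[mu]_(x in `[a, b]) (f w x)%:E = 1)%E.
Variables (cf Cf : R).
Hypothesis cf0 : 0 < cf.
Hypothesis Fb : forall x, x \in `[a, b] -> cf <= f w x <= Cf.

Let E := e0 a b f nu w.

Lemma int_gF (g : R -> R) (M : R) : measurable_fun setT g ->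
  (forall x, x \in `[a, b] -> `|g x| <= M) ->
  mu.-integrable `[a, b] (EFin \o (fun x => g x * f w x)).
Proof.
move=> mg gM; apply: (@integrable_bnd _ a b _ (M * Cf)).
  by apply: measurable_funTS; apply: measurable_funM.
move=> x xI; rewrite normrM; apply: ler_pM => //; first exact: gM.
have /andP[c1 c2] := Fb xI; rewrite ger0_norm//; apply: le_trans (ltW cf0) c1.
Qed.

Lemma RI_F : \int[mu]_(x in `[a, b]) f w x = 1.
Proof. by rewrite /Rintegral F1. Qed.

Lemma measurable_id' : measurable_fun setT (fun x : R => x).
Proof. exact: measurable_id. Qed.

Lemma normIE x : x \in `[a, b] -> `|x - E| <= `|a| + `|b| + `|E|.
Proof.
move=> xI; apply: le_trans (ler_normB _ _) _; rewrite lerD2r; exact: normI.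
Qed.

Lemma int_xF : mu.-integrable `[a, b] (EFin \o (fun x => x * f w x)).
Proof. apply: (@int_gF _ (`|a| + `|b|)); [exact: measurable_id'|exact: normI]. Qed.

Lemma int_F : mu.-integrable `[a, b] (EFin \o (fun x => f w x)).
Proof.
have := @int_gF (fun _ => 1) 1 (measurable_cst _); rewrite normr1 => /(_ (fun _ _ => lexx _)).
by apply: eq_integrable => // x _ /=; rewrite mul1r.
Qed.

Lemma e0E : E = \int[mu]_(x in `[a, b]) (x * f w x).
Proof. by rewrite /E /e0 condE_indep. Qed.

Lemma int0 : \int[mu]_(x in `[a, b]) ((x - E) * f w x) = 0.
Proof.
have iEF := iZ E int_F.
under eq_Rintegral do rewrite mulrBl.
rewrite (RintegralB mI int_xF iEF) (RintegralZl _ mI int_F).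
by rewrite RI_F mulr1 -e0E subrr.
Qed.

Definition Gf (x : R) :=
  \int[mu]_(t in `[a, b]) (((t - E) * (if x <= t then 1 else 0)) * f w t).
Definition Pf (x : R) :=
  \int[mu]_(t in `[a, b]) ((if x <= t then 1 else 0) * f w t).

Lemma F_ge0 x : x \in `[a, b] -> 0 <= f w x.
Proof. by move=> /Fb /andP[c1 _]; apply: le_trans (ltW cf0) c1. Qed.

Lemma normS1 (x t : R) : `|(if x <= t then 1 else 0 : R)| <= 1.
Proof. by case: ifP; rewrite ?normr1 ?normr0. Qed.

Let K := `|a| + `|b| + `|E|.

Lemma iGf x : mu.-integrable `[a, b]
   (EFin \o (fun t => ((t - E) * (if x <= t then 1 else 0)) * f w t)).
Proof.
apply: (@int_gF _ K).
  apply: measurable_funM; last exact: measurable_S.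
  by apply: measurable_funB => //; exact: measurable_id'.
move=> t tI; rewrite normrM -[leRHS]mulr1; apply: ler_pM => //.
  exact: normIE.
exact: normS1.
Qed.

Lemma iPf x : mu.-integrable `[a, b]
   (EFin \o (fun t => (if x <= t then 1 else 0) * f w t)).
Proof. by apply: (@int_gF _ 1) => [|t _]; [exact: measurable_S|exact: normS1]. Qed.

Lemma Pf_cdf x : x \in `[a, b] -> 1 - cdfXW a b f nu w x = Pf x.
Proof.
move=> xI; rewrite /cdfXW condE_indep.
have iS' : mu.-integrable `[a, b]
   (EFin \o (fun t => (if t <= x then 1 else 0) * f w t)).
  by apply: (@int_gF _ 1) => [|t _]; [exact: measurable_S'|exact: normS1].
have i3 : mu.-integrable `[a, b] (EFin \o (fun t =>
    ((if x <= t then 1 else 0) + (if t <= x then 1 else 0) - 1) * f w t)).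
  apply: (@int_gF _ 1) => [|t _].
    apply: measurable_funB => //; apply: measurable_funD.
    - exact: measurable_S.
    - exact: measurable_S'.
  by case: ifP; case: ifP; rewrite ?addr0 ?add0r ?subrr ?normr0 ?subr0 ?normr1 ?addrK ?normr1 ?normrN ?normr1//.
have z3 : \int[mu]_(t in `[a, b])
    (((if x <= t then 1 else 0) + (if t <= x then 1 else 0) - 1) * f w t) = 0.
  rewrite /Rintegral (@integral_single _ _ x) // => t tx.
  case: (ltgtP x t) => [xt|tx'|xt]; last by move: tx; rewrite xt eqxx.
  - by rewrite addr0 subrr mul0r.
  - by rewrite add0r subrr mul0r.
have : Pf x + \int[mu]_(x0 in `[a, b]) ((if x0 <= x then 1 else 0) * f w x0) = 1.
  rewrite /Pf -RintegralD//; last exact: iPf.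
  transitivity (\int[mu]_(t in `[a, b]) (f w t +
    ((if x <= t then 1 else 0) + (if t <= x then 1 else 0) - 1) * f w t)).
    by apply: eq_Rintegral => t _; rewrite mulrBl mul1r addrCA subrr addr0 mulrDl.
  by rewrite RintegralD// ?z3 ?addr0 ?RI_F//; exact: int_F.
move=> h; apply: (addIr (\int[mu]_(x0 in `[a, b]) ((if x0 <= x then 1 else 0) * f w x0))).
by rewrite subrK h.
Qed.

Lemma Gf0 x : Pf x = 0 -> Gf x = 0.
Proof.
move=> P0; apply/eqP; rewrite -normr_le0.
apply: le_trans (le_normr_Rintegral mI (iGf x)) _.
apply: le_trans (_ : _ <= \int[mu]_(t in `[a, b]) (K * ((if x <= t then 1 else 0) * f w t))) _.
  apply: le_Rintegral => //.
  - exact: (integrable_norm (iGf x)).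
  - exact: iZ (iPf x).
  - move=> t tI /=; rewrite -mulrA normrM; apply: ler_pM => //; first exact: normIE.
    rewrite normrM (ger0_norm (F_ge0 tI)); apply: ler_pM => //.
    - exact: F_ge0.
    - by case: ifP => _; rewrite ?normr1 ?normr0.
by rewrite (RintegralZl _ mI (iPf x)) -/(Pf x) P0 mulr0.
Qed.

Lemma omega_numE x : x \in `[a, b] -> omega_num a b f nu w x = Gf x.
Proof.
move=> xI; rewrite /omega_num Pf_cdf // /condE_tail !condE_indep -/(Gf x) -/(Pf x).
have [P0|P0] := eqVneq (Pf x) 0; first by rewrite P0 mulr0 Gf0.
by rewrite divfK.
Qed.

Hypothesis ab : a < b.

Lemma v0E : v0 a b f nu w = \int[mu]_(x in `[a, b]) ((x - E) ^+ 2 * f w x).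
Proof. by rewrite /v0 condE_indep. Qed.

Lemma mg : measurable_fun setT (fun t : R => (t - E) * f w t).
Proof.
apply: measurable_funM => //.
by apply: measurable_funB => //; exact: measurable_id'.
Qed.

Lemma bg t : t \in `[a, b] -> `|(t - E) * f w t| <= K * Cf.
Proof.
move=> tI; rewrite normrM; apply: ler_pM => //; first exact: normIE.
by rewrite ger0_norm ?F_ge0//; have /andP[] := Fb tI.
Qed.

Lemma int_id_S t : t \in `[a, b] ->
  \int[mu]_(x in `[a, b]) (1 * (if x <= t then 1 else 0)) = t - a.
Proof.
move=> tI.
have := @ftc_piece _ a b (fun x => x) (fun _ => 1) ab _ _ _ t tI; apply.
- by apply: continuous_subspaceT => x; exact: cvg_id.
- by apply: continuous_subspaceT => x; exact: cvg_cst.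
Qed.

Lemma RIomega : \int[mu]_(x in `[a, b]) omega_num a b f nu w x = v0 a b f nu w.
Proof.
transitivity (\int[mu]_(x in `[a, b]) Gf x).
  by apply: eq_Rintegral => x xI; rewrite omega_numE//; exact: set_mem.
transitivity (\int[mu]_(x in `[a, b])
    ((\int[mu]_(t in `[a, b]) (((t - E) * f w t) * (if x <= t then 1 else 0))) * 1)).
  apply: eq_Rintegral => x _; rewrite mulr1; apply: eq_Rintegral => t _.
  by rewrite mulrAC.
rewrite (@fubini_tri _ a b _ (fun _ => 1) (K * Cf) 1 mg (measurable_cst _) bg); last first.
  by move=> x _; rewrite normr1.
transitivity (\int[mu]_(t in `[a, b]) (((t - E) * f w t) * (t - a))).
  by apply: eq_Rintegral => t tI; rewrite int_id_S//; exact: set_mem.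
transitivity (\int[mu]_(t in `[a, b]) ((t - E) ^+ 2 * f w t + (E - a) * ((t - E) * f w t))).
  by apply: eq_Rintegral => t _; ring.
have i2 : mu.-integrable `[a, b] (EFin \o (fun t => (t - E) ^+ 2 * f w t)).
  apply: (@int_gF _ (K ^+ 2)).
    apply: measurable_funX; apply: measurable_funB => //; exact: measurable_id'.
  move=> t tI; rewrite normrX; apply: lerXn2r; rewrite ?nnegrE ?normr_ge0//.
    by apply: le_trans (normr_ge0 _) (normIE tI).
  exact: normIE.
have i1 : mu.-integrable `[a, b] (EFin \o (fun t => (t - E) * f w t)).
  by apply: (@int_gF _ K) => //; [apply: measurable_funB => //; exact: measurable_id'|exact: normIE].
rewrite RintegralD//; last exact: iZ.
by rewrite (RintegralZl _ mI i1) int0 mulr0 addr0 v0E.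
Qed.

Lemma cont_bnd (k : R -> R) : {within `[a, b], continuous k} ->
  exists M, forall x, x \in `[a, b] -> `|k x| <= M.
Proof.
move=> ck; have /compact_bounded[M [_ mrt]] := continuous_compact ck (@segment_compact _ a b).
exists (`|M| + 1) => x xI; apply: (mrt (`|M| + 1)); last by exists x.
have := ler_norm M; lra.
Qed.

Lemma mGf : measurable_fun setT Gf.
Proof.
rewrite /Gf /Rintegral.
apply: (measurableT_comp (f := fine)) => //.
apply: (@measurable_param _ _ _ _ (fun p : R * R => ((p.2 - E) * (if p.1 <= p.2 then 1 else 0)) * f w p.2)) => //.
apply: measurable_funM; last by apply: measurableT_comp; [exact: mF|exact: measurable_snd].
apply: measurable_funM; last exact: measurable_S2.
apply: measurable_funB => //; exact: measurable_snd.
Qed.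

Lemma iG_abs : mu.-integrable `[a, b] (EFin \o (fun t => `|(t - E) * f w t|)).
Proof.
have := integrable_norm (@int_gF (fun t => t - E) K _ normIE).
apply; apply: measurable_funB => //; exact: measurable_id'.
Qed.

Let MG := \int[mu]_(t in `[a, b]) `|(t - E) * f w t|.

Lemma bGf x : `|Gf x| <= MG.
Proof.
apply: le_trans (le_normr_Rintegral mI (iGf x)) _.
apply: le_Rintegral => //.
- exact: (integrable_norm (iGf x)).
- exact: iG_abs.
- move=> t tI /=; rewrite mulrAC normrM -[leRHS]mulr1; apply: ler_pM => //.
  exact: normS1.
Qed.

Hypothesis v0pos : 0 < v0 a b f nu w.

Section fixed_u.
Variables (h dh : R -> TU -> R) (u : TU).
Hypothesis mhu : measurable_fun setT (fun x => h x u).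
Hypothesis mdhu : measurable_fun setT (fun x => dh x u).
Hypothesis chu : {within `[a, b], continuous (fun x => h x u)}.
Hypothesis cdhu : {within `[a, b], continuous (fun x => dh x u)}.
Hypothesis dhu : forall x, x \in `]a, b[ -> is_derive x 1 (fun t => h t u) (dh x u).

Lemma ixhF : mu.-integrable `[a, b] (EFin \o (fun x => (x - E) * h x u * f w x)).
Proof.
have [Mh hM] := cont_bnd chu.
apply: (@int_gF _ (K * Mh)).
  apply: measurable_funM => //; apply: measurable_funB => //; exact: measurable_id'.
move=> x xI; rewrite normrM; apply: ler_pM => //; [exact: normIE|exact: hM].
Qed.

Lemma Gdh : \int[mu]_(x in `[a, b]) (Gf x * dh x u) =
  \int[mu]_(x in `[a, b]) ((x - E) * h x u * f w x).
Proof.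
have [Mk kM] := cont_bnd cdhu.
transitivity (\int[mu]_(x in `[a, b])
    ((\int[mu]_(t in `[a, b]) (((t - E) * f w t) * (if x <= t then 1 else 0))) * dh x u)).
  apply: eq_Rintegral => x _; congr (_ * _); apply: eq_Rintegral => t _.
  by rewrite mulrAC.
rewrite (@fubini_tri _ a b _ (fun x => dh x u) (K * Cf) Mk mg mdhu bg kM).
transitivity (\int[mu]_(t in `[a, b]) (((t - E) * f w t) * (h t u - h a u))).
  by apply: eq_Rintegral => t tI; rewrite (@ftc_piece _ a b _ _ ab chu cdhu dhu)//; exact: set_mem.
have i1 : mu.-integrable `[a, b] (EFin \o (fun t => (t - E) * f w t)).
  by apply: (@int_gF _ K) => //; [apply: measurable_funB => //; exact: measurable_id'|exact: normIE].
transitivity (\int[mu]_(t in `[a, b]) ((t - E) * h t u * f w t - h a u * ((t - E) * f w t))).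
  by apply: eq_Rintegral => t _; ring.
rewrite RintegralB//; first by rewrite (RintegralZl _ mI i1) int0 mulr0 subr0.
- exact: ixhF.
- exact: iZ.
Qed.

Lemma i1' : mu.-integrable `[a, b] (EFin \o (fun t => (t - E) * f w t)).
Proof.
by apply: (@int_gF _ K) => //; [apply: measurable_funB => //; exact: measurable_id'|exact: normIE].
Qed.

Lemma rhs_inner : (\int[mu]_(x in `[a, b]) (omega a b f nu w x * dh x u * f w x)%:E =
  ((v0 a b f nu w)^-1 * \int[mu]_(x in `[a, b]) ((x - E) * h x u * f w x))%:E)%E.
Proof.
have [Mk kM] := cont_bnd cdhu.
have iGdh : mu.-integrable `[a, b] (EFin \o (fun x => Gf x * dh x u)).
  apply: (@integrable_bnd _ a b _ (MG * Mk)).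
    by apply: measurable_funTS; apply: measurable_funM => //; exact: mGf.
  move=> x xI; rewrite normrM; apply: ler_pM => //; [exact: bGf|exact: kM].
transitivity (\int[mu]_(x in `[a, b]) ((v0 a b f nu w)^-1 * (Gf x * dh x u))%:E)%E.
  apply: eq_integral => x xI; congr EFin.
  have xI' : x \in `[a, b] by exact: set_mem xI.
  rewrite /omega RIomega omega_numE//.
  have Fx : f w x != 0 by rewrite gt_eqF//; have /andP[c1 _] := Fb xI'; exact: lt_le_trans c1.
  have v0n : v0 a b f nu w != 0 by rewrite gt_eqF.
  transitivity ((f w x)^-1 * f w x * ((v0 a b f nu w)^-1 * (Gf x * dh x u))); first by ring.
  by rewrite mulVf // mul1r.
by rewrite intE; [rewrite RintegralZl ?Gdh|exact: iZ].
Qed.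

Lemma lhs_inner (c : R) :
  (\int[mu]_(x in `[a, b]) (((x - E) * (h x u - c)) * f w x)%:E =
   (\int[mu]_(x in `[a, b]) ((x - E) * h x u * f w x))%:E)%E.
Proof.
transitivity (\int[mu]_(x in `[a, b]) ((x - E) * h x u * f w x - c * ((x - E) * f w x))%:E)%E.
  by apply: eq_integral => x _; congr EFin; ring.
rewrite intE; last by apply: iB; [exact: ixhF|exact: iZ i1'].
by rewrite RintegralB//; [rewrite (RintegralZl _ mI i1') int0 mulr0 subr0|exact: ixhF|exact: iZ i1'].
Qed.

End fixed_u.

Section fixed_hu.
Variables (h dh : R -> TU -> R) (SU : set TU).
Hypothesis mSU : measurable SU.
Hypothesis nuSU : nu w SU = 1%E.
Hypothesis mh : measurable_fun setT (fun p : R * TU => h p.1 p.2).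
Hypothesis mdh : measurable_fun setT (fun p : R * TU => dh p.1 p.2).
Hypothesis hyp_u : forall u, SU u ->
     {within `[a, b], continuous (fun x => h x u)} /\
     {within `[a, b], continuous (fun x => dh x u)} /\
     (forall x, x \in `]a, b[ -> is_derive x 1 (fun t => h t u) (dh x u)).
Hypothesis mom2 : (condEe a b f nu (fun x u => (h x u) ^+ 2)%R w < +oo)%E.

Let N0 : nu w (~` SU) = 0%E.
Proof. by apply: measureC0 => //; exact: prob_kernel. Qed.

Let mhu u : measurable_fun setT (fun x => h x u).
Proof. exact: (measurable_fun_pair1 (f := fun p : R * TU => h p.1 p.2)). Qed.

Let mdhu u : measurable_fun setT (fun x => dh x u).
Proof. exact: (measurable_fun_pair1 (f := fun p : R * TU => dh p.1 p.2)). Qed.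

Let psi u := (\int[mu]_(x in `[a, b]) ((x - E) * h x u * f w x))%:E.

Let mswap (k : R -> TU -> R) : measurable_fun setT (fun p : R * TU => k p.1 p.2) ->
  measurable_fun setT (fun p : TU * R => k p.2 p.1).
Proof.
move=> mk; have := measurableT_comp mk (@measurable_swap _ _ TU R).
by apply: eq_measurable_fun => p _.
Qed.

Lemma mpsi : measurable_fun setT psi.
Proof.
apply/measurable_EFinP; rewrite /Rintegral.
apply: (measurableT_comp (f := fine)) => //.
apply: (@measurable_param _ _ _ _ (fun p : TU * R => (p.2 - E) * h p.2 p.1 * f w p.2)) => //.
apply: measurable_funM; last by apply: measurableT_comp; [exact: mF|exact: measurable_snd].
apply: measurable_funM; last exact: mswap.
apply: measurable_funB => //; exact: measurable_snd.
Qed.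

Let X u := (\int[mu]_(x in `[a, b]) ((h x u) ^+ 2 * f w x)%:E)%E.

Lemma mX : measurable_fun setT X.
Proof.
apply: (@measurable_param _ _ _ _ (fun p : TU * R => (h p.2 p.1) ^+ 2 * f w p.2)) => //.
apply: measurable_funM; last by apply: measurableT_comp; [exact: mF|exact: measurable_snd].
apply: measurable_funX; exact: mswap.
Qed.

Lemma X_ge0 u : (0 <= X u)%E.
Proof. by apply: integral_ge0 => x xI; rewrite lee_fin mulr_ge0 ?sqr_ge0// F_ge0//; exact: xI. Qed.

Lemma psi_bound u : SU u -> (`|psi u| <= (v0 a b f nu w)%:E + X u)%E.
Proof.
move=> Su; have [chu [cdhu dhu]] := hyp_u Su.
have [Mh hM] := cont_bnd chu.
have ih2 : mu.-integrable `[a, b] (EFin \o (fun x => (h x u) ^+ 2 * f w x)).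
  apply: (@int_gF _ (Mh ^+ 2)); first exact: measurable_funX.
  move=> x xI; rewrite normrX; apply: lerXn2r; rewrite ?nnegrE ?normr_ge0 ?hM//.
  by apply: le_trans (normr_ge0 _) (hM _ xI).
have ie2 : mu.-integrable `[a, b] (EFin \o (fun t => (t - E) ^+ 2 * f w t)).
  apply: (@int_gF _ (K ^+ 2)).
    apply: measurable_funX; apply: measurable_funB => //; exact: measurable_id'.
  move=> t tI; rewrite normrX; apply: lerXn2r; rewrite ?nnegrE ?normr_ge0//.
    by apply: le_trans (normr_ge0 _) (normIE tI).
  exact: normIE.
rewrite /psi /X (intE ih2) -EFinD lee_fin.
apply: le_trans (le_normr_Rintegral mI (ixhF (mhu u) chu)) _.
rewrite v0E -RintegralD//.
apply: le_Rintegral => //.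
- exact: integrable_norm (ixhF (mhu u) chu).
- exact: iD.
- move=> x xI /=; have F0 : 0 <= f w x by apply: F_ge0; exact: xI.
  rewrite normrM (ger0_norm F0) -mulrDl; apply: ler_wpM2r => //.
  exact: amgm.
Qed.

Lemma ipsi : (nu w).-integrable setT psi.
Proof.
apply/integrableP; split; first exact: mpsi.
apply: (@le_lt_trans _ _ (\int[nu w]_u ((v0 a b f nu w)%:E + X u))%E).
  apply: (@ge0_le_integral_nullD _ _ _ _ (~` SU)) => //.
  - exact: measurableC.
  - by move=> u _; rewrite adde_ge0 ?X_ge0// lee_fin; apply: ltW; exact: v0pos.
  - by move=> u _ /contrapT Su; exact: psi_bound.
rewrite ge0_integralD//; last 3 first.
- by move=> u _; rewrite lee_fin; apply: ltW; exact: v0pos.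
- by move=> u _; exact: X_ge0.
- exact: mX.
rewrite integral_cst// prob_kernel mule1.
by rewrite lte_add_pinfty// ltry.
Qed.

Lemma inner_eq : ((b0 a b f nu h w)%:E =
  \int[nu w]_u \int[mu]_(x in `[a, b]) (omega a b f nu w x * dh x u * f w x)%:E)%E.
Proof.
have cE : covXY a b f nu h w = fine (\int[nu w]_u psi u)%E.
  rewrite /covXY /condE /condEe; congr fine.
  apply: (@integral_null _ _ _ _ (~` SU)) => //; first exact: measurableC.
  move=> u /contrapT Su; have [chu [cdhu dhu]] := hyp_u Su.
  exact: lhs_inner.
have -> : (\int[nu w]_u \int[mu]_(x in `[a, b]) (omega a b f nu w x * dh x u * f w x)%:E =
   \int[nu w]_u ((v0 a b f nu w)^-1%:E * psi u))%E.
  apply: (@integral_null _ _ _ _ (~` SU)) => //; first exact: measurableC.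
  move=> u /contrapT Su; have [chu [cdhu dhu]] := hyp_u Su.
  by rewrite rhs_inner// EFinM.
rewrite integralZl//; last exact: ipsi.
rewrite /b0 cE EFinM fineK//; exact: integrable_fin_num ipsi.
Qed.

End fixed_hu.
End fixed_w.
End Model.

Unset Implicit Arguments. Set Strict Implicit.

Theorem proposition2 (R : realType) (dW dU : measure_display)
  (TW : measurableType dW) (TU : measurableType dU)
  (mu : probability TW R) (nu : R.-pker TW ~> TU)
  (SW : set TW) (SU : set TU)
  (a b : R) (f : TW -> R -> R) (h : R -> TU -> R) (dh : R -> TU -> R)
  (kappa cf Cf : R) :
  (* supports of W and U (sets of full probability) *)
  measurable SW -> mu SW = 1%E ->
  measurable SU -> (forall w, SW w -> nu w SU = 1%E) ->
  (* (i) X continuous with bounded support [a,b]; density f w of X | W = w *)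
  a < b ->
  measurable_fun setT (fun p : TW * R => f p.1 p.2) ->
  (forall w, SW w ->
     (\int[lebesgue_measure]_(x in `[a, b]) (f w x)%:E)%E = 1%E) ->
  (* (ii) density bounded and bounded away from zero on W x X *)
  0 < cf -> (forall w x, SW w -> x \in `[a, b] -> cf <= f w x <= Cf) ->
  (* (iii) Y = h(X,U), h measurable, C^1 in x on [a,b] with derivative dh *)
  measurable_fun setT (fun p : R * TU => h p.1 p.2) ->
  measurable_fun setT (fun p : R * TU => dh p.1 p.2) ->
  (forall u, SU u ->
     {within `[a, b], continuous (fun x => h x u)} /\
     {within `[a, b], continuous (fun x => dh x u)} /\
     (forall x, x \in `]a, b[ -> is_derive x 1 (fun t => h t u) (dh x u))) ->
  (* second moments: E[Y^2 | W = w] < oo and E[X^2 | W = w] < oo *)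
  (forall w, SW w -> (condEe a b f nu (fun x u => (h x u) ^+ 2)%R w < +oo)%E) ->
  (forall w, SW w -> (condEe a b f nu (fun x _ => x ^+ 2)%R w < +oo)%E) ->
  (* v_0(w) >= kappa > 0 *)
  0 < kappa -> (forall w, SW w -> kappa <= v0 a b f nu w) ->
  (* well-definedness of beta_0 = E[b_0(W)] and of the right-hand side *)
  (\int[mu]_w (`|b0 a b f nu h w|)%:E < +oo)%E ->
  (\int[mu]_w \int[nu w]_u \int[lebesgue_measure]_(x in `[a, b])
      (`|omega a b f nu w x * dh x u| * f w x)%:E < +oo)%E ->
  (* conclusion: beta_0 = E[omega(W,X) dh(X,U)/dx] *)
  (\int[mu]_w (b0 a b f nu h w)%:E =
   \int[mu]_w \int[nu w]_u \int[lebesgue_measure]_(x in `[a, b])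
      (omega a b f nu w x * dh x u * f w x)%:E)%E.
Proof.
move=> mSW muSW mSU nuSU ab mf f1 cf0 Fb mh mdh hu mom2 momX kappa0 kv _ _.
apply: (@integral_null _ _ _ mu (~` SW)).
- exact: measurableC.
- by apply: measureC0 => //; exact: probability_setT.
- move=> w /contrapT Sw.
  apply: (inner_eq _ (f1 w Sw) cf0 (fun x xI => Fb w x Sw xI) ab _ mSU (nuSU w Sw) mh mdh hu (mom2 w Sw)).
  + exact: (measurable_fun_pair2 (f := fun p : TW * R => f p.1 p.2)).
  + exact: lt_le_trans kappa0 (kv w Sw).
Qed.
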